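(* Let $k$ be an algebraically closed field of characteristic $p\ge5$. The singular set of $R^p$ in $\mathbf{A}^3_k$, i.e. the algebraic set defined by the ideal $\langle R^p(e_2),R^p(e_4),R^p(e_6)\rangle\subset k[e_2,e_4,e_6]$, equals $\{e_4^3-e_6^2=0\}$.
   Context: $R = \frac{e_2^2-e_4}{12}\frac{\partial}{\partial e_2} + \frac{e_2e_4-e_6}{3}\frac{\partial}{\partial e_4} + \frac{e_2e_6-e_4^2}{2}\frac{\partial}{\partial e_6}$ is the Ramanujan vector field on $\mathbf{A}^3_k$ with coordinates $(e_2,e_4,e_6)$, and $R^p$ is its $p$-fold composite as a derivation of $k[e_2,e_4,e_6]$. *)

(* Defs.v *)
From HB Require Import structures.
From mathcomp Require Import all_boot all_order all_algebra.
From mathcomp Require Import mpoly.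
Set Implicit Arguments. Unset Strict Implicit. Unset Printing Implicit Defensive.
Import GRing.Theory.
Local Open Scope ring_scope.

Definition i2 : 'I_3 := @Ordinal 3 0 isT.
Definition i4 : 'I_3 := @Ordinal 3 1 isT.
Definition i6 : 'I_3 := @Ordinal 3 2 isT.

Section Ramanujan.
Variable k : fieldType.

Definition e2 : {mpoly k[3]} := 'X_i2.
Definition e4 : {mpoly k[3]} := 'X_i4.
Definition e6 : {mpoly k[3]} := 'X_i6.

Definition ramanujan (f : {mpoly k[3]}) : {mpoly k[3]} :=
    ((12%:R)^-1 *: (e2 ^+ 2 - e4)) * f^`M(i2)
  + ((3%:R)^-1 *: (e2 * e4 - e6)) * f^`M(i4)
  + ((2%:R)^-1 *: (e2 * e6 - e4 ^+ 2)) * f^`M(i6).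

Definition ramanujan_pow (p : nat) (f : {mpoly k[3]}) : {mpoly k[3]} :=
  iter p ramanujan f.

End Ramanujan.

(* Main.v *)
Require Import Defs.
From HB Require Import structures.
From mathcomp Require Import all_boot all_order all_algebra.
From mathcomp Require Import mpoly.
From mathcomp Require Import ring.
From mathcomp Require Import zify.
Import GRing.Theory.
Local Open Scope ring_scope.

Lemma arith p a b c : (5 <= p)%N -> (a + b + c <= p.+1)%N -> (p %| a)%N ->
  (p %| (2 * a + 4 * b + 6 * c - 2))%N -> (2 <= 2 * a + 4 * b + 6 * c)%N ->
  [/\ (a < p)%N, (b < p)%N & (c < p)%N].
Proof.
move=> p5 hs /dvdnP[q ha] /dvdnP[r hr] h2.
have q1 : (q <= 1)%N.
  case: q ha => [|[|q]] // ha; exfalso; move: hs; rewrite ha; nia.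
have r6 : (r <= 6)%N.
  case: (leqP r 6) => // r7; exfalso; nia.
case: q q1 ha => [|[|//]] _ ha.
- do 7?[case: r r6 hr => [|r] r6 hr; [split; lia|]]; by [].
- do 7?[case: r r6 hr => [|r] r6 hr; [split; lia|]]; by [].
Qed.

Section Basics.
Variable k : fieldType.
Local Notation P := {mpoly k[3]}.
Local Notation R := (@ramanujan k).

Definition q2 : P := e2 k ^+ 2 - e4 k.
Definition q4 : P := e2 k * e4 k - e6 k.
Definition q6 : P := e2 k * e6 k - e4 k ^+ 2.

Lemma ramE f : R f = (12%:R^-1)%:MP * q2 * f^`M(i2) + (3%:R^-1)%:MP * q4 * f^`M(i4)
   + (2%:R^-1)%:MP * q6 * f^`M(i6).
Proof. by rewrite /ramanujan !mul_mpolyC. Qed.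

Lemma ramD f g : R (f + g) = R f + R g.
Proof. rewrite !ramE !mderivD; ring. Qed.
Lemma ramZ c f : R (c *: f) = c *: R f.
Proof. rewrite !ramE !mderivZ -!mul_mpolyC; ring. Qed.
Lemma ramN f : R (- f) = - R f.
Proof. rewrite !ramE !mderivN; ring. Qed.
Lemma ramC c : R c%:MP = 0.
Proof. rewrite !ramE !mderivC; ring. Qed.
Lemma ram0 : R 0 = 0.
Proof. by rewrite -(mpolyC0) ramC. Qed.
Lemma ramM f g : R (f * g) = R f * g + f * R g.
Proof. rewrite !ramE !mderivM; ring. Qed.

Definition rp n (f : P) := iter n R f.
Lemma rpD n f g : rp n (f + g) = rp n f + rp n g.
Proof. by elim: n => //= n IH; rewrite IH ramD. Qed.
Lemma rpZ n c f : rp n (c *: f) = c *: rp n f.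
Proof. by elim: n => //= n IH; rewrite IH ramZ. Qed.
Lemma rpN n f : rp n (- f) = - rp n f.
Proof. by elim: n => //= n IH; rewrite IH ramN. Qed.
Lemma rp0 n : rp n 0 = 0.
Proof. by elim: n => //= n IH; rewrite IH ram0. Qed.
Lemma rpB n f g : rp n (f - g) = rp n f - rp n g.
Proof. by rewrite rpD rpN. Qed.
Lemma rp_sum n (I : Type) (r : seq I) (F : I -> P) :
  rp n (\sum_(i <- r) F i) = \sum_(i <- r) rp n (F i).
Proof. elim: r => [|a r IH]; first by rewrite !big_nil rp0.
by rewrite !big_cons rpD IH. Qed.
Lemma rpS n f : rp n.+1 f = rp n (R f).
Proof. by rewrite /rp iterSr. Qed.
Lemma rpSl n f : rp n.+1 f = R (rp n f).
Proof. by []. Qed.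

Lemma ram_sum (I : Type) (r : seq I) (F : I -> P) :
  R (\sum_(i <- r) F i) = \sum_(i <- r) R (F i).
Proof. elim: r => [|a r IH]; first by rewrite !big_nil ram0.
by rewrite !big_cons ramD IH. Qed.

Lemma rp_leibniz n f g : rp n (f * g) =
  \sum_(i < n.+1) ('C(n, i)%:R : k) *: (rp i f * rp (n - i) g).
Proof.
elim: n => [|n IH]; first by rewrite big_ord1 /= bin0 scale1r.
rewrite rpSl IH ram_sum.
rewrite (eq_bigr (fun i : 'I_n.+1 => ('C(n, i)%:R : k) *: (rp i.+1 f * rp (n - i) g)
   + ('C(n, i)%:R : k) *: (rp i f * rp (n.+1 - i) g))); last first.
  move=> i _; rewrite ramZ ramM scalerDr -!rpSl subSn //; exact: ltn_ord i.
rewrite big_split /= [RHS]big_ord_recl /= bin0.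
have E : \sum_(i < n.+1)
     ('C(n.+1, bump 0 i)%:R : k) *: (R (rp (0 + i) f) * rp (n.+1 - bump 0 i) g) =
   \sum_(i < n.+1) (('C(n, i.+1)%:R : k) *: (R (rp i f) * rp (n - i) g)
   + ('C(n, i)%:R : k) *: (R (rp i f) * rp (n - i) g)).
  by apply: eq_bigr => i _; rewrite /bump /= add1n add0n binS natrD scalerDl subSS.
rewrite E big_split /= addrC addrA; congr (_ + _).
rewrite [LHS]big_ord_recl; rewrite [in RHS]big_ord_recr /= (bin_small (ltnSn n)) scale0r addr0 bin0.
congr (_ + _); apply: eq_bigr => i _; rewrite /bump /= add1n subSS.
Qed.

Lemma dX (i j : 'I_3) : ('X_j : P)^`M(i) = ((j == i)%:R).
Proof.
rewrite mderivX mnm1E; case: eqP => [->|_]; last by rewrite scale0r.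
have -> : (U_(i) - U_(i))%MM = 0%MM :> 'X_{1..3} by apply/mnmP => l; rewrite !mnmE subnn.
by rewrite mpolyX0 scale1r.
Qed.

Definition Hop (f : P) : P := 2%:R * e2 k * f^`M(i2) + 4%:R * e4 k * f^`M(i4) + 6%:R * e6 k * f^`M(i6).

Variable p : nat.
Hypothesis hp : p \in [pchar k].
Hypothesis hp5 : (5 <= p)%N.

Lemma natr_neq0 n : (0 < n < p)%N -> (n%:R : k) != 0.
Proof.
move=> /andP[n0 np]; rewrite -(dvdn_pcharf hp); apply/negP => /dvdn_leq.
by move=> /(_ n0); rewrite leqNgt np.
Qed.

Definition u : k := (12%:R)^-1.
Lemma u12 : 12%:R * u = 1.
Proof.
rewrite /u mulfV //.
have -> : (12%:R : k) = 2%:R * 2%:R * 3%:R by rewrite -!natrM.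
by rewrite !mulf_neq0 // natr_neq0 // (leq_trans _ hp5).
Qed.

Lemma ramE2 f : R f = u%:MP * (q2 * f^`M(i2) + 4%:R * q4 * f^`M(i4) + 6%:R * q6 * f^`M(i6)).
Proof.
have h3 : (3%:R : k)^-1 = 4%:R * u.
  apply: (mulfI (natr_neq0 3 _)); first by rewrite (leq_trans _ hp5).
  by rewrite mulfV ?natr_neq0 ?(leq_trans _ hp5) // mulrA -natrM u12.
have h2 : (2%:R : k)^-1 = 6%:R * u.
  apply: (mulfI (natr_neq0 2 _)); first by rewrite (leq_trans _ hp5).
  by rewrite mulfV ?natr_neq0 ?(leq_trans _ hp5) // mulrA -natrM u12.
rewrite ramE h3 h2 /u !mpolyCM -!mpolyC_nat; ring.
Qed.

Lemma bin_p_vanish i : (0 < i < p)%N -> ('C(p, i)%:R : k) = 0.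
Proof.
move=> hi; apply/eqP; rewrite -(dvdn_pcharf hp).
exact: prime_dvd_bin (pcharf_prime hp) hi.
Qed.

Lemma rpM f g : rp p (f * g) = rp p f * g + f * rp p g.
Proof.
have p0 : (0 < p)%N by rewrite (leq_trans _ hp5).
rewrite rp_leibniz big_ord_recr subnn binn scale1r.
rewrite (bigD1 (Ordinal p0)) // bin0 subn0 scale1r big1. 1: by rewrite /= addr0 addrC.
move=> i ne; rewrite bin_p_vanish ?scale0r //= ltn_ord andbT lt0n.
by apply: contra ne => /eqP i0; apply/eqP/val_inj; rewrite /= i0.
Qed.

Lemma de2 (i : 'I_3) : (e2 k)^`M(i) = ((i2 == i)%:R). Proof. exact: dX. Qed.
Lemma de4 (i : 'I_3) : (e4 k)^`M(i) = ((i4 == i)%:R). Proof. exact: dX. Qed.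
Lemma de6 (i : 'I_3) : (e6 k)^`M(i) = ((i6 == i)%:R). Proof. exact: dX. Qed.
Lemma dMC (i : 'I_3) c (f : P) : (c%:MP * f)^`M(i) = c%:MP * f^`M(i).
Proof. exact: mderiv_mulC. Qed.

Ltac dsimp := rewrite /q2 /q4 /q6 ?expr2;
  rewrite ?(dMC, mderivD, mderivB, mderivN, mderivM, de2, de4, de6, mderivC) /=.

Lemma commD2 f : (R f)^`M(i2) = R (f^`M(i2)) + u%:MP * Hop f.
Proof.
rewrite !ramE2 /Hop; dsimp.
rewrite ?(mderiv_comm i4 i2 f) ?(mderiv_comm i6 i2 f) ?(mderiv_comm i6 i4 f).
rewrite -!mpolyC_nat; ring.
Qed.
Ltac dcomm f := rewrite ?(mderiv_comm i4 i2 f) ?(mderiv_comm i6 i2 f) ?(mderiv_comm i6 i4 f).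

Lemma commH f : Hop (R f) = R (Hop f) + 2%:R * R f.
Proof.
rewrite !ramE2 /Hop; dsimp; dcomm f.
rewrite -!mpolyC_nat; ring.
Qed.
Lemma HopD f g : Hop (f + g) = Hop f + Hop g.
Proof. rewrite /Hop !mderivD; ring. Qed.
Lemma HopZ c f : Hop (c *: f) = c *: Hop f.
Proof. rewrite /Hop !mderivZ -!mul_mpolyC; ring. Qed.

Lemma natMP n (f : P) : n%:R * f = (n%:R : k) *: f.
Proof. by rewrite -mul_mpolyC mpolyC_nat. Qed.

Lemma commH_n n f : Hop (rp n f) = rp n (Hop f) + ((2 * n)%:R : k) *: rp n f.
Proof.
elim: n => [|n IH]; first by rewrite /= scale0r addr0.
rewrite rpSl commH IH ramD ramZ natMP -!rpSl.
rewrite mulnS natrD -!mul_mpolyC; ring.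
Qed.

Lemma commD2_n n f : (rp n.+1 f)^`M(i2) =
  rp n.+1 (f^`M(i2)) + ((n.+1)%:R * u) *: rp n (Hop f + (n%:R : k) *: f).
Proof.
elim: n => [|n IH].
  by rewrite rpSl /= commD2 mul1r scale0r addr0 mul_mpolyC.
rewrite rpSl commD2 IH ramD ramZ commH_n -(rpSl n.+1) -(rpSl n).
rewrite !rpD !rpZ -!mul_mpolyC !mpolyCM -!mpolyC_nat.
rewrite !(natrD, natrM) -?natr1; ring.
Qed.

Lemma commD2_p f : (rp p f)^`M(i2) = rp p (f^`M(i2)).
Proof.
have p0 : (0 < p)%N by rewrite (leq_trans _ hp5).
have := commD2_n p.-1 f; rewrite prednK // => ->.
by rewrite (pcharf0 hp) mul0r scale0r addr0.
Qed.

Lemma commH_p f : Hop (rp p f) = rp p (Hop f).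
Proof. by rewrite commH_n natrM (pcharf0 hp) mulr0 scale0r addr0. Qed.

Lemma rp_const n c : (0 < n)%N -> rp n c%:MP = 0.
Proof. by case: n => // n _; rewrite rpS ramC rp0. Qed.

Definition Ea := rp p (e2 k).
Definition Eb := rp p (e4 k).
Definition Ec := rp p (e6 k).
Definition Delta : P := e4 k ^+ 3 - e6 k ^+ 2.

Lemma p_gt0 : (0 < p)%N. Proof. by rewrite (leq_trans _ hp5). Qed.

Lemma Da2 : Ea^`M(i2) = 0.
Proof. by rewrite /Ea commD2_p de2 eqxx -mpolyC1 rp_const // p_gt0. Qed.
Lemma Db2 : Eb^`M(i2) = 0.
Proof. by rewrite /Eb commD2_p de4 /= rp0. Qed.
Lemma Dc2 : Ec^`M(i2) = 0.
Proof. by rewrite /Ec commD2_p de6 /= rp0. Qed.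

Lemma Hop_e2 : Hop (e2 k) = 2%:R * e2 k.
Proof. rewrite /Hop !de2 /=; ring. Qed.

Lemma HEa : Hop Ea = 2%:R * Ea.
Proof. by rewrite /Ea commH_p Hop_e2 !natMP rpZ. Qed.

Lemma Re2 : R (e2 k) = u%:MP * q2.
Proof. rewrite ramE2 !de2 /=; ring. Qed.
Lemma Re4 : R (e4 k) = u%:MP * (4%:R * q4).
Proof. rewrite ramE2 !de4 /=; ring. Qed.
Lemma Re6 : R (e6 k) = u%:MP * (6%:R * q6).
Proof. rewrite ramE2 !de6 /=; ring. Qed.

Lemma REa : R Ea = u%:MP * (2%:R * e2 k * Ea - Eb).
Proof.
rewrite /Ea -rpSl rpS Re2 mul_mpolyC rpZ /q2 expr2 rpB rpM -mul_mpolyC.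
rewrite /Eb /Ea; ring.
Qed.
Lemma REb : R Eb = u%:MP * (4%:R * (Ea * e4 k + e2 k * Eb - Ec)).
Proof.
rewrite /Eb -rpSl rpS Re4 mul_mpolyC rpZ natMP rpZ /q4 rpB rpM -!mul_mpolyC.
rewrite /Eb /Ea /Ec -mpolyC_nat; ring.
Qed.
Lemma REc : R Ec = u%:MP * (6%:R * (Ea * e6 k + e2 k * Ec - (Eb * e4 k + e4 k * Eb))).
Proof.
rewrite /Ec -rpSl rpS Re6 mul_mpolyC rpZ natMP rpZ /q6 expr2 rpB !rpM -!mul_mpolyC.
rewrite /Eb /Ea /Ec -mpolyC_nat; ring.
Qed.

Definition inI (g : P) := exists u1 u2 u3 : P, g = u1 * Ea + u2 * Eb + u3 * Ec.

Lemma inIa : inI Ea. Proof. by exists 1, 0, 0; ring. Qed.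
Lemma inID g h : inI g -> inI h -> inI (g + h).
Proof.
move=> [u1 [u2 [u3 ->]]] [v1 [v2 [v3 ->]]].
by exists (u1 + v1), (u2 + v2), (u3 + v3); ring.
Qed.
Lemma inIM h g : inI g -> inI (h * g).
Proof. by move=> [u1 [u2 [u3 ->]]]; exists (h * u1), (h * u2), (h * u3); ring. Qed.
Lemma inIN g : inI g -> inI (- g).
Proof. by move=> /(inIM (-1)); rewrite mulN1r. Qed.
Lemma inIB g h : inI g -> inI h -> inI (g - h).
Proof. by move=> ? /inIN; apply: inID. Qed.
Lemma inIZ c g : inI g -> inI (c *: g).
Proof. by move=> /(inIM c%:MP); rewrite mul_mpolyC. Qed.

Lemma inIR g : inI g -> inI (R g).
Proof.
move=> [u1 [u2 [u3 ->]]].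
exists (R u1 + u1 * u%:MP * 2%:R * e2 k + u2 * u%:MP * 4%:R * e4 k + u3 * u%:MP * 6%:R * e6 k),
  (R u2 - u1 * u%:MP + u2 * u%:MP * 4%:R * e2 k - u3 * u%:MP * 12%:R * e4 k),
  (R u3 - u2 * u%:MP * 4%:R + u3 * u%:MP * 6%:R * e2 k).
rewrite !ramD !ramM REa REb REc; ring.
Qed.

Lemma inID2 g : inI g -> inI (g^`M(i2)).
Proof.
move=> [u1 [u2 [u3 ->]]].
exists (u1^`M(i2)), (u2^`M(i2)), (u3^`M(i2)).
rewrite !mderivD !mderivM Da2 Db2 Dc2; ring.
Qed.

Lemma inIH g : inI g -> inI (Hop g).
Proof.
move=> hg.
have -> : Hop g = 12%:R * ((R g)^`M(i2) - R (g^`M(i2))).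
  by rewrite commD2 addrAC subrr add0r mulrA -mpolyC_nat -mpolyCM u12 mpolyC1 mul1r.
apply: inIM; apply: inIB; first exact/inID2/inIR.
exact/inIR/inID2.
Qed.

Lemma ram12 g : 12%:R * R g = q2 * g^`M(i2) + 4%:R * q4 * g^`M(i4) + 6%:R * q6 * g^`M(i6).
Proof. by rewrite ramE2 mulrA -mpolyC_nat -mpolyCM u12 mpolyC1 mul1r. Qed.

Lemma key4 g : 24%:R * Delta * g^`M(i4) =
  6%:R * e6 k * (12%:R * R g - q2 * g^`M(i2)) - 6%:R * q6 * (Hop g - 2%:R * e2 k * g^`M(i2)).
Proof. rewrite ram12 /Hop /q2 /q4 /q6 /Delta; ring. Qed.

Lemma key6 g : 24%:R * Delta * g^`M(i6) =
  4%:R * q4 * (Hop g - 2%:R * e2 k * g^`M(i2)) - 4%:R * e4 k * (12%:R * R g - q2 * g^`M(i2)).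
Proof. rewrite ram12 /Hop /q2 /q4 /q6 /Delta; ring. Qed.

Lemma n24 : (24%:R : k) != 0.
Proof.
have -> : (24%:R : k) = 2%:R * 2%:R * 2%:R * 3%:R by rewrite -!natrM.
by rewrite !mulf_neq0 // natr_neq0 // (leq_trans _ hp5).
Qed.

Lemma div24 (h : P) : h = (24%:R : k)^-1 *: (24%:R * h).
Proof. by rewrite natMP scalerA mulVf ?n24 // scale1r. Qed.

Lemma inID4 g : inI g -> inI (Delta * g^`M(i4)).
Proof.
move=> hg; rewrite (div24 (Delta * _)) mulrA key4; apply: inIZ; apply: inIB; apply: inIM.
  by apply: inIB; [apply/inIM/inIR | apply/inIM/inID2].
by apply: inIB; [apply/inIH | apply/inIM/inID2].
Qed.

Lemma inID6 g : inI g -> inI (Delta * g^`M(i6)).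
Proof.
move=> hg; rewrite (div24 (Delta * _)) mulrA key6; apply: inIZ; apply: inIB; apply: inIM.
  by apply: inIB; [apply/inIH | apply/inIM/inID2].
by apply: inIB; [apply/inIM/inIR | apply/inIM/inID2].
Qed.

Lemma dpow (x : P) N i : x * (x ^+ N)^`M(i) = N%:R * x^`M(i) * x ^+ N.
Proof.
elim: N => [|N IH]; first by rewrite expr0 -mpolyC1 mderivC mulr0 mul0r mul0r.
rewrite exprS mderivM mulrDr IH -natr1; ring.
Qed.

Lemma dpow0 (x : P) N i : x^`M(i) = 0 -> (x ^+ N)^`M(i) = 0.
Proof.
move=> h; elim: N => [|N IH]; first by rewrite expr0 -mpolyC1 mderivC.
by rewrite exprS mderivM IH h mul0r mulr0 addr0.
Qed.

Lemma DeltaD2 : Delta^`M(i2) = 0.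
Proof. by rewrite /Delta mderivB !dpow0 ?subr0 // ?de4 ?de6. Qed.

Definition Qd (h : P) := exists N, inI (Delta ^+ N * h).

Lemma Qder h (i : 'I_3) : Qd h -> Qd (h^`M(i)).
Proof.
move=> [N hN].
have : i = i2 \/ i = i4 \/ i = i6.
  by case: i => [[|[|[|]]]] //= ?; [left|right;left|right;right]; apply/val_inj.
case=> [->|[->|->]].
- exists N; have := inID2 _ hN; by rewrite mderivM dpow0 ?DeltaD2 // mul0r add0r.
- exists N.+1.
  have -> : Delta ^+ N.+1 * h^`M(i4) =
     Delta * (Delta ^+ N * h)^`M(i4) - (N%:R * Delta^`M(i4)) * (Delta ^+ N * h).
    by rewrite mderivM mulrDr !mulrA dpow exprS; ring.
  by apply: inIB; [apply: inID4 | apply: inIM].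
- exists N.+1.
  have -> : Delta ^+ N.+1 * h^`M(i6) =
     Delta * (Delta ^+ N * h)^`M(i6) - (N%:R * Delta^`M(i6)) * (Delta ^+ N * h).
    by rewrite mderivM mulrDr !mulrA dpow exprS; ring.
  by apply: inIB; [apply: inID6 | apply: inIM].
Qed.

Lemma Qderm h m : Qd h -> Qd (h^`M[m]).
Proof.
move=> hh; rewrite mderivm_foldr.
by elim: (flatten _) => [|i s IH] //=; apply: Qder.
Qed.

Lemma constm (f : P) : f^`M[mlead f] =
   (f@_(mlead f) *+ (\prod_(i < 3) ((mlead f) i) ^_ ((mlead f) i)))%:MP.
Proof.
apply/mpolyP => m'; rewrite mcoeff_mderivm mcoeffC.
have [->|nz] := eqVneq m' 0%MM; first by rewrite addm0 mulr1.
rewrite mulr0 mcoeff_gt_mlead ?mul0rn //.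
have := ltmc_add2r (mlead f) 0%MM m'; rewrite addm0 => ->.
rewrite Order.POrderTheory.lt_neqAle eq_sym nz /=.
by have := lemc_addl m' 0%MM; rewrite addm0.
Qed.

Lemma fact_ndvd n : (n < p)%N -> ~~ (p %| n`!)%N.
Proof.
have pr := pcharf_prime hp.
elim: n => [|n IH] hn; first by rewrite fact0 dvdn1; apply/negP => /eqP p1; move: hp5; rewrite p1.
rewrite factS Euclid_dvdM // negb_or IH ?(ltnW hn) // andbT.
apply/negP => /(dvdn_leq (ltn0Sn n)); by rewrite leqNgt hn.
Qed.

Lemma cnz (f : P) : f != 0 -> (forall i, ((mlead f) i < p)%N) ->
  f@_(mlead f) *+ (\prod_(i < 3) ((mlead f) i) ^_ ((mlead f) i)) != 0.
Proof.
move=> fn0 hl; rewrite -mulr_natr mulf_neq0 ?mleadc_eq0 //.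
rewrite -(dvdn_pcharf hp) !big_ord_recr big_ord0 /= !ffactnn mul1n.
have pr := pcharf_prime hp.
by rewrite !Euclid_dvdM // !negb_or !fact_ndvd.
Qed.

Lemma inI_eval (x : 'I_3 -> k) g : Ea.@[x] = 0 -> Eb.@[x] = 0 -> Ec.@[x] = 0 ->
  inI g -> g.@[x] = 0.
Proof.
move=> ha hb hc [u1 [u2 [u3 ->]]].
by rewrite !mevalD !mevalM ha hb hc !mulr0 !addr0.
Qed.

Lemma dir4 (x : 'I_3 -> k) : Ea.@[x] = 0 -> Eb.@[x] = 0 -> Ec.@[x] = 0 ->
  Ea != 0 -> (forall i, ((mlead Ea) i < p)%N) -> Delta.@[x] = 0.
Proof.
move=> ha hb hc nz hl.
have Q0 : Qd Ea by exists 0%N; rewrite expr0 mul1r; exact: inIa.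
have [N hN] := Qderm _ (mlead Ea) Q0.
move: hN; rewrite constm => /(inI_eval x _ ha hb hc).
rewrite mevalM mevalC rmorphXn /=.
move=> /eqP; rewrite mulf_eq0 (negbTE (cnz _ nz hl)) orbF expf_eq0 => /andP[_ /eqP //].
Qed.

Definition P0 : 'I_3 -> k := fun _ => 1.
Definition Lf (f : P) : k :=
  (f^`M(i2)).@[P0] - 10%:R * (f^`M(i4)).@[P0] + 21%:R * (f^`M(i6)).@[P0].

Ltac evsimp := rewrite ?(mevalD, mevalB, mevalN, mevalM, mevalC, mevalXU, rmorph_nat, rmorphXn) /P0 /=.

Lemma ueq (a b : k) : a = 12%:R * u * b -> a = b.
Proof. by rewrite u12 mul1r. Qed.

Lemma L_R f : Lf (R f) = Lf f.
Proof. rewrite /Lf ramE2; dsimp; evsimp; apply: ueq; ring. Qed.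

Lemma L_rp n f : Lf (rp n f) = Lf f.
Proof. by elim: n => //= n IH; rewrite L_R IH. Qed.

Lemma Ea_neq0 : Ea != 0.
Proof.
apply/eqP => h.
have := L_rp p (e2 k); rewrite -/Ea h /Lf !mderiv0 !meval0 !de2 /= meval1 meval0.
by rewrite !mulr0 subr0 !addr0 subr0 => /esym/eqP; rewrite oner_eq0.
Qed.

Definition dg (f : P) := mdeg (mlead f).

Lemma dgD f g : (dg (f + g) <= maxn (dg f) (dg g))%N.
Proof. by rewrite /dg -mdeg_max; apply: lemc_mdeg; apply: mleadD_le. Qed.
Lemma dgB f g : (dg (f - g) <= maxn (dg f) (dg g))%N.
Proof. by rewrite /dg -mdeg_max; apply: lemc_mdeg; apply: mleadB_le. Qed.
Lemma dgM f g : (dg (f * g) <= dg f + dg g)%N.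
Proof. by rewrite /dg -mdegD; apply: lemc_mdeg; apply: mleadM_le. Qed.
Lemma dgC c : dg c%:MP = 0%N.
Proof. by rewrite /dg mleadC mdeg0. Qed.
Lemma dgX (i : 'I_3) : dg 'X_i = 1%N.
Proof. by rewrite /dg mleadXm mdeg1. Qed.

Lemma dgder f i : f^`M(i) != 0 -> ((dg (f^`M(i))).+1 <= dg f)%N.
Proof.
move=> nz; rewrite /dg.
set m := mlead (f^`M(i)).
have : f^`M(i)@_m != 0 by rewrite mleadc_eq0.
rewrite mcoeff_mderiv => h.
have : (m + U_(i))%MM \in msupp f.
  by rewrite mcoeff_msupp; apply: contraNneq h => ->; rewrite mul0rn.
move=> /msupp_le_mlead /lemc_mdeg; rewrite mdegD mdeg1 addn1 //.
Qed.

Lemma dg_term q f i : (dg q <= 2)%N -> (dg (q * f^`M(i)) <= (dg f).+1)%N.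
Proof.
move=> hq; have [->|nz] := eqVneq (f^`M(i)) 0; first by rewrite mulr0 -mpolyC0 dgC.
apply: leq_trans (dgM _ _) _; have := dgder _ _ nz.
by case: (dg f) => // d; rewrite ltnS => h; apply: leq_trans (leq_add hq h) _; rewrite add2n.
Qed.

Lemma dgq2 : (dg q2 <= 2)%N.
Proof.
apply: leq_trans (dgB _ _) _; rewrite geq_max expr2 (leq_trans (dgM _ _)) //.
  by rewrite /e2 dgX.
by rewrite /e4 dgX.
Qed.
Lemma dgq4 : (dg (4%:R * q4) <= 2)%N.
Proof.
apply: leq_trans (dgM _ _) _; rewrite -mpolyC_nat dgC add0n.
apply: leq_trans (dgB _ _) _; rewrite geq_max; apply/andP; split.
  by apply: leq_trans (dgM _ _) _; rewrite /e2 /e4 !dgX.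
by rewrite /e6 dgX.
Qed.
Lemma dgq6 : (dg (6%:R * q6) <= 2)%N.
Proof.
apply: leq_trans (dgM _ _) _; rewrite -mpolyC_nat dgC add0n.
apply: leq_trans (dgB _ _) _; rewrite geq_max expr2; apply/andP; split.
  by apply: leq_trans (dgM _ _) _; rewrite /e2 /e6 !dgX.
by apply: leq_trans (dgM _ _) _; rewrite /e4 !dgX.
Qed.

Lemma dgR f : (dg (R f) <= (dg f).+1)%N.
Proof.
rewrite ramE2; apply: leq_trans (dgM _ _) _; rewrite dgC add0n.
apply: leq_trans (dgD _ _) _; rewrite geq_max; apply/andP; split; last first.
  by apply: dg_term; exact: dgq6.
apply: leq_trans (dgD _ _) _; rewrite geq_max; apply/andP; split; last first.
  by apply: dg_term; exact: dgq4.
by apply: dg_term; exact: dgq2.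
Qed.

Lemma dg_rp n f : (dg (rp n f) <= dg f + n)%N.
Proof.
elim: n => [|n IH] /=; first by rewrite addn0.
by apply: leq_trans (dgR _) _; rewrite addnS ltnS.
Qed.

Lemma dgEa : (mdeg (mlead Ea) <= p.+1)%N.
Proof. by have := dg_rp p (e2 k); rewrite /e2 dgX add1n. Qed.

Lemma coefXd (i : 'I_3) (f : P) m : ('X_i * f^`M(i))@_m = f@_m *+ m i.
Proof.
have [m0|mp] := posnP (m i).
  rewrite m0 mulr0n mcoeffM big1 // => -[k1 k2] /= /eqP mk.
  rewrite mcoeffX; case: eqP => [e|_]; last by rewrite mul0r.
  have := congr1 (fun mm : 'X_{1..3} => mm i) mk.
  by rewrite /= m0 mnmDE -e mnm1E eqxx add1n.
have e : m = (U_(i) + (m - U_(i)))%MM.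
  apply/mnmP => j; rewrite !mnmE; case: eqP => [<-|_] /=; last by rewrite subn0.
  by rewrite add1n subn1 prednK.
rewrite mulrC {1}e mcoeffMX mcoeff_mderiv addmC -e.
congr (_ *+ _); rewrite !mnmE eqxx subn1 prednK //.
Qed.

Lemma coefHop (f : P) m : (Hop f)@_m = f@_m *+ (2 * m i2 + 4 * m i4 + 6 * m i6)%N.
Proof.
rewrite /Hop !mcoeffD -!mulrA -!mpolyC_nat !mcoeffCM /e2 /e4 /e6 !coefXd.
by rewrite !mulr_natl -!mulrnA -!mulrnDr (mulnC _ 2) (mulnC _ 4) (mulnC _ 6).
Qed.

Lemma sum3 (F : 'I_3 -> nat) : (\sum_i F i)%N = (F i2 + F i4 + F i6)%N.
Proof.
rewrite !big_ord_recr big_ord0 /= add0n.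
by congr (_ + _ + _)%N; congr F; apply/val_inj.
Qed.

Lemma mlead_bound : forall i, ((mlead Ea) i < p)%N.
Proof.
set a := mlead Ea.
have nzc : Ea@_a != 0 by rewrite mleadc_eq0 Ea_neq0.
have hdeg : (a i2 + a i4 + a i6 <= p.+1)%N.
  by have := dgEa; rewrite mdegE sum3.
have hd2 : (p %| a i2)%N.
  have [->|ap] := posnP (a i2); first exact: dvdn0.
  have e : a = ((a - U_(i2)) + U_(i2))%MM.
    apply/mnmP => j; rewrite !mnmE; case: eqP => [<-|_] /=; last by rewrite addn0 subn0.
    by rewrite addn1 subn1 prednK.
  have := congr1 (mcoeff (a - U_(i2))%MM) Da2.
  rewrite mcoeff_mderiv -e mcoeff0 mnmBE mnm1E eqxx subn1 prednK // => /eqP.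
  by rewrite -mulr_natr mulf_eq0 (negbTE nzc) /= (dvdn_pcharf hp).
have hH : ((2 * a i2 + 4 * a i4 + 6 * a i6)%:R : k) = 2%:R.
  have := congr1 (mcoeff a) HEa; rewrite coefHop -mpolyC_nat mcoeffCM -mulr_natr mulrC.
  rewrite -[_ *+ _]mulr_natr mul1r => h; exact: (mulfI nzc h).
have [W2|W2] := leqP 2 (2 * a i2 + 4 * a i4 + 6 * a i6).
  have hd : (p %| (2 * a i2 + 4 * a i4 + 6 * a i6 - 2))%N.
    by rewrite (dvdn_pcharf hp) natrB // hH subrr.
  have [h1 h2 h3] := arith _ _ _ _ hp5 hdeg hd2 hd W2.
  move=> i; have : i = i2 \/ i = i4 \/ i = i6.
    by case: i => [[|[|[|]]]] //= ?; [left|right;left|right;right]; apply/val_inj.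
  by case=> [->|[->|->]].
have z : (a i2 = 0 /\ a i4 = 0 /\ a i6 = 0)%N by lia.
move=> i; have : i = i2 \/ i = i4 \/ i = i6.
  by case: i => [[|[|[|]]]] //= ?; [left|right;left|right;right]; apply/val_inj.
by case=> [->|[->|->]]; rewrite ?(proj1 z) ?(proj1 (proj2 z)) ?(proj2 (proj2 z)) (leq_trans _ hp5).
Qed.

Definition sv : P := 'X_i2.
Definition tv : P := 'X_i4.
Definition lq : 3.-tuple P := [tuple sv + tv; tv ^+ 2; tv ^+ 3].
Definition phi (f : P) : P := f \mPo lq.
Definition Dop (g : P) : P := u%:MP * (sv ^+ 2 * g^`M(i2) + 2%:R * tv * sv * g^`M(i4)).

Lemma DopD f g : Dop (f + g) = Dop f + Dop g.
Proof. rewrite /Dop !mderivD; ring. Qed.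
Lemma DopZ c f : Dop (c *: f) = c *: Dop f.
Proof. rewrite /Dop !mderivZ -!mul_mpolyC; ring. Qed.
Lemma DopM f g : Dop (f * g) = Dop f * g + f * Dop g.
Proof. rewrite /Dop !mderivM; ring. Qed.
Lemma DopC c : Dop c%:MP = 0.
Proof. rewrite /Dop !mderivC; ring. Qed.

Lemma dsv (i : 'I_3) : sv^`M(i) = ((i2 == i)%:R). Proof. exact: dX. Qed.
Lemma dtv (i : 'I_3) : tv^`M(i) = ((i4 == i)%:R). Proof. exact: dX. Qed.

Definition Cp (f : P) := Dop (phi f) = phi (R f).

Lemma phiM f g : phi (f * g) = phi f * phi g.
Proof. exact: rmorphM. Qed.
Lemma phiD f g : phi (f + g) = phi f + phi g.
Proof. exact: raddfD. Qed.
Lemma phiB f g : phi (f - g) = phi f - phi g.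
Proof. exact: raddfB. Qed.
Lemma phiC c : phi c%:MP = c%:MP.
Proof. exact: comp_mpolyC. Qed.
Lemma phiZ c f : phi (c *: f) = c *: phi f.
Proof. exact: comp_mpolyZ. Qed.

Lemma CpM f g : Cp f -> Cp g -> Cp (f * g).
Proof. rewrite /Cp => hf hg; rewrite (phiM f g) DopM hf hg ramM (phiD (R f * g)) (phiM (R f)) (phiM f (R g)). by []. Qed.

Lemma Cp1 : Cp 1.
Proof. by rewrite /Cp -mpolyC1 ramC phiC DopC -mpolyC0 phiC. Qed.

Lemma Cp_pow f n : Cp f -> Cp (f ^+ n).
Proof. by move=> h; elim: n => [|n IH]; [rewrite expr0; exact: Cp1 | rewrite exprS; apply: CpM]. Qed.

Lemma phiX (i : 'I_3) : phi 'X_i = lq`_i.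
Proof. exact: comp_mpolyXU. Qed.

Lemma CpX (i : 'I_3) : Cp 'X_i.
Proof.
have : i = i2 \/ i = i4 \/ i = i6.
  by case: i => [[|[|[|]]]] //= ?; [left|right;left|right;right]; apply/val_inj.
case=> [->|[->|->]]; rewrite /Cp.
- rewrite -/(e2 k) Re2 phiM phiC /q2 phiB !phiM /e2 /e4 !phiX /= /Dop.
  rewrite !mderivD !dsv !dtv /=; ring.
- rewrite -/(e4 k) Re4 !phiM phiC -mpolyC_nat phiC /q4 phiB !phiM /e2 /e4 /e6 !phiX /= /Dop.
  rewrite !exprS !expr0 !mulr1 !mderivM !dtv /=; ring.
- rewrite -/(e6 k) Re6 !phiM phiC -mpolyC_nat phiC /q6 phiB !phiM /e2 /e4 /e6 !phiX /= /Dop.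
  rewrite !exprS !expr0 !mulr1 !mderivM !dtv /=; ring.
Qed.

Lemma Cp_all f : Cp f.
Proof.
elim/mpolyind: f => [|c m q _ _ IH].
  by rewrite /Cp -mpolyC0 ramC phiC DopC.
rewrite /Cp ramD ramZ (phiD (c *: 'X_[m])) (phiD (c *: R 'X_[m])) (phiZ c 'X_[m]).
rewrite (phiZ c (R 'X_[m])) DopD DopZ IH; congr (_ *: _ + _).
rewrite mpolyXE_id; apply: (big_ind Cp) => //; first exact: Cp1.
  exact: CpM.
by move=> i _; apply/Cp_pow/CpX.
Qed.

Lemma phi_rp n f : phi (rp n f) = iter n Dop (phi f).
Proof. by elim: n => //= n IH; rewrite -IH; symmetry; apply: Cp_all. Qed.

Lemma iterDopD n f g : iter n Dop (f + g) = iter n Dop f + iter n Dop g.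
Proof. by elim: n => //= n IH; rewrite IH DopD. Qed.
Lemma iterDopZ n c f : iter n Dop (c *: f) = c *: iter n Dop f.
Proof. by elim: n => //= n IH; rewrite IH DopZ. Qed.

Definition mono j m : P := tv ^+ j * sv ^+ m.

Lemma Dop_mono j m : Dop (mono j m) = (((2 * j + m)%:R : k) * u) *: mono j m.+1.
Proof.
transitivity (u%:MP * (sv * tv ^+ j * (sv * (sv ^+ m)^`M(i2))
   + 2%:R * sv * sv ^+ m * (tv * (tv ^+ j)^`M(i4)))).
  rewrite /Dop /mono !mderivM (dpow0 tv j i2) ?dtv // (dpow0 sv m i4) ?dsv //.
  set S := sv ^+ m; set T := tv ^+ j; set S' := S^`M(i2); set T' := T^`M(i4); ring.
rewrite !dpow dsv dtv /mono -mul_mpolyC mpolyCM -!mpolyC_nat natrD natrM exprS.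
rewrite !eqxx /=; set S := sv ^+ m; set T := tv ^+ j; ring.
Qed.

Lemma iterDop_mono n j m :
  iter n Dop (mono j m) = (\prod_(i < n) (((2 * j + m + i)%:R : k) * u)) *: mono j (m + n).
Proof.
elim: n => [|n IH]; first by rewrite big_ord0 scale1r addn0.
rewrite iterS IH DopZ Dop_mono scalerA big_ord_recr /= addnS.
by rewrite addnA.
Qed.

Lemma prod_vanish K : \prod_(i < p) (((K + i)%:R : k) * u) = 0.
Proof.
have p0 := p_gt0.
have [i0 [hi0 hd]] : exists i0, (i0 < p)%N /\ (p %| K + i0)%N.
  have := divn_eq K p; have := ltn_pmod K p0.
  case: (posnP (K %% p)) => r0 hr hK.
    by exists 0%N; split => //; rewrite addn0 /dvdn r0.
  exists (p - K %% p)%N; split; first by rewrite ltn_subrL r0 p0.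
  apply/dvdnP; exists (K %/ p).+1; lia.
rewrite (bigD1 (Ordinal hi0)) //=.
by move: hd; rewrite (dvdn_pcharf hp) => /eqP ->; rewrite !mul0r.
Qed.

Lemma phiEa : phi Ea = 0.
Proof.
rewrite /Ea phi_rp /e2 phiX /=.
have -> : sv + tv = mono 0 1 + mono 1 0 by rewrite /mono expr0 expr1 mul1r expr0 mulr1.
by rewrite iterDopD !iterDop_mono !prod_vanish !scale0r addr0.
Qed.
Lemma phiEb : phi Eb = 0.
Proof.
rewrite /Eb phi_rp /e4 phiX /=.
have -> : tv ^+ 2 = mono 2 0 by rewrite /mono expr0 mulr1.
by rewrite !iterDop_mono !prod_vanish !scale0r.
Qed.
Lemma phiEc : phi Ec = 0.
Proof.
rewrite /Ec phi_rp /e6 phiX /=.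
have -> : tv ^+ 3 = mono 3 0 by rewrite /mono expr0 mulr1.
by rewrite !iterDop_mono !prod_vanish !scale0r.
Qed.

Lemma dir5 (x : 'I_3 -> k) : x i4 ^+ 3 - x i6 ^+ 2 = 0 ->
  [/\ Ea.@[x] = 0, Eb.@[x] = 0 & Ec.@[x] = 0].
Proof.
move=> /eqP; rewrite subr_eq0 => /eqP hD.
have [t0 [ht2 ht3]] : exists t0, t0 ^+ 2 = x i4 /\ t0 ^+ 3 = x i6.
  have [x40|x4n] := eqVneq (x i4) 0.
    exists 0; rewrite x40 !expr0n /=; split => //.
    by move: hD; rewrite x40 expr0n /= => /esym/eqP; rewrite expf_eq0 /= => /eqP ->.
  exists (x i6 / x i4).
  have e2' : (x i6 / x i4) ^+ 2 = x i4.
    by rewrite expr_div_n -hD; field.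
  split; first exact: e2'.
  by rewrite exprS e2'; field.
pose w : 'I_3 -> k := fun i => if i == i2 then x i2 - t0 else t0.
have ext : forall f : P, f.@[x] = (phi f).@[w].
  move=> f; rewrite /phi comp_mpoly_meval; apply: meval_eq => i.
  have : i = i2 \/ i = i4 \/ i = i6.
    by case: i => [[|[|[|]]]] //= ?; [left|right;left|right;right]; apply/val_inj.
  case=> [->|[->|->]] /=.
  - have -> : tnth lq i2 = sv + tv by [].
    by rewrite mevalD /sv /tv (mevalXU w i2) (mevalXU w i4) /w /= subrK.
  - have -> : tnth lq i4 = tv ^+ 2 by [].
    rewrite !exprS expr0 !mevalM meval1 /tv (mevalXU w i4) /w /= -ht2; ring.
  - have -> : tnth lq i6 = tv ^+ 3 by [].
    rewrite !exprS expr0 !mevalM meval1 /tv (mevalXU w i4) /w /= -ht3; ring.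
by split; rewrite ext ?phiEa ?phiEb ?phiEc meval0.
Qed.

End Basics.

Theorem corollary2p6 (k : closedFieldType) (p : nat)
  (hp : p \in [pchar k]) (hp5 : (5 <= p)%N) (x : 'I_3 -> k) :
  [/\ (ramanujan_pow p (e2 k)).@[x] = 0,
      (ramanujan_pow p (e4 k)).@[x] = 0 &
      (ramanujan_pow p (e6 k)).@[x] = 0]
  <-> x i4 ^+ 3 - x i6 ^+ 2 = 0.
Proof.
split.
- move=> [ha hb hc].
  have := @dir4 _ _ hp hp5 x ha hb hc (@Ea_neq0 _ _ hp hp5) (@mlead_bound _ _ hp hp5).
  rewrite /Delta mevalB !exprS !expr0 !mevalM meval1 /e4 /e6 !mevalXU.
  by rewrite !mulr1.
- by move=> h; exact: (@dir5 _ _ hp hp5 x h).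
Qed.
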